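(* Let $(\alpha_N)_{N\ge0}\subseteq[0,1]$ converge to some $\alpha$, and let $L_N=\log_2(N)/5$ (rounded to an integer). For $q\in[0,1]$ let $Z_0,Z_1,\dots$ be a Galton–Watson-type process with $Z_0\sim$ Bernoulli$(q)$, where each individual of generation $0$ has a Binomial$(3,q)$ number of children and each individual of every later generation has a Binomial$(2,q)$ number of children, independently. Then there is $C'>0$, independent of $q$ and $N$, such that for all $N$, $$\Big|\mathbb E\big(Z_0(1-\alpha_N)^{Z_0+Z_1+\cdots+Z_{L_N-1}}\big)-g_{\alpha_N}(q)\Big|\le C'e^{-\alpha_NL_N},$$ and the same bound holds with $\mathbb E\big(Z_0(1-\alpha_N)^{Z_0+\cdots+Z_{L_N-1}}\mathbf 1_{\{Z_{L_N-1}=0\}}\big)$ in place of the first expectation.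
   Context: For $\alpha\in(0,1)$ let $g_\alpha(x)=\frac{(1-\sqrt{1-4(1-\alpha)x(1-x)})^3}{8(1-\alpha)^2x^2}$ for $x\in(0,1]$ and $g_\alpha(0)=0$; let $g_0(x)=x$ for $x\le1/2$ and $g_0(x)=(1-x)^3/x^2$ for $x>1/2$; for $\alpha=1$ set $g_1\equiv0$. *)

(* Defs.v *)
From Stdlib Require Import Reals Lra Lia ZArith.
Open Scope R_scope.

Definition g (a x : R) : R :=
  if Req_EM_T a 1 then 0
  else if Req_EM_T a 0 then
    (if Rle_dec x (1/2) then x else (1 - x) ^ 3 / x ^ 2)
  else if Req_EM_T x 0 then 0
  else (1 - sqrt (1 - 4 * (1 - a) * x * (1 - x))) ^ 3 / (8 * (1 - a) ^ 2 * x ^ 2).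

Definition binom_pmf (n : nat) (q : R) (m : nat) : R :=
  C n m * q ^ m * (1 - q) ^ (n - m).

(* W ind q s r c n : conditional expectation, given that the current
   generation has n individuals each having Binomial(c,q) children (later
   generations Binomial(2,q)), of s^(sum of this and the next r generation
   sizes), multiplied (if ind) by the indicator that the last of these
   generations is empty. *)
Fixpoint W (ind : bool) (q s : R) (r c n : nat) : R :=
  match r with
  | O => s ^ n * (if ind then (if Nat.eqb n 0 then 1 else 0) else 1)
  | S r' => s ^ n * sum_f_R0 (fun m => binom_pmf (c * n) q m * W ind q s r' 2 m) (c * n)
  end.

(* E( Z_0 * s^(Z_0+...+Z_{L-1}) * [1_{Z_{L-1}=0} if ind] ) with Z_0 ~ Bernoulli(q),
   generation 0 offspring Binomial(3,q), later offspring Binomial(2,q).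
   For L = 0 the sum is empty (and no indicator is applied). *)
Definition GW_expect (ind : bool) (q s : R) (L : nat) : R :=
  match L with
  | O => sum_f_R0 (fun z0 => binom_pmf 1 q z0 * INR z0) 1
  | S L' => sum_f_R0 (fun z0 => binom_pmf 1 q z0 * INR z0 * W ind q s L' 3 z0) 1
  end.

(* nearest integer (halves rounded up), as a nat *)
Definition round_nat (x : R) : nat := Z.to_nat (up (x + / 2) - 1).

Definition log2 (x : R) : R := ln x / ln 2.

Definition LN (N : nat) : nat := round_nat (log2 (INR N) / 5).

(* Main.v *)
Require Import Defs.
From Stdlib Require Import Reals Lra Lia Psatz.
Open Scope R_scope.

Lemma W_mult (ind : bool) (q s : R) (r : nat) : forall c n,
  W ind q s r c n = (W ind q s r c 1) ^ n.
Proof.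
  induction r as [|r IH]; intros c n.
  - simpl. destruct ind.
    + destruct n; simpl; ring.
    + simpl. rewrite !Rmult_1_r. reflexivity.
  - unfold W; fold W.
    assert (Hs : forall k, sum_f_R0 (fun m => binom_pmf k q m * W ind q s r 2 m) k
               = (q * W ind q s r 2 1 + (1 - q)) ^ k).
    { intro k. rewrite binomial. apply sum_eq. intros i _.
      unfold binom_pmf. rewrite (IH 2%nat i). rewrite Rpow_mult_distr. ring. }
    rewrite !Hs. rewrite Nat.mul_1_r. rewrite Rpow_mult_distr, pow_mult. rewrite pow_1. reflexivity.
Qed.

Lemma W_S1 ind q s r c :
  W ind q s (S r) c 1 = s * (q * W ind q s r 2 1 + (1 - q)) ^ c.
Proof.
  unfold W; fold W.
  rewrite Nat.mul_1_r.
  replace (sum_f_R0 (fun m => binom_pmf c q m * W ind q s r 2 m) c)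
    with ((q * W ind q s r 2 1 + (1 - q)) ^ c).
  - ring.
  - rewrite binomial. apply sum_eq. intros i _.
    unfold binom_pmf. rewrite (W_mult ind q s r 2 i). rewrite Rpow_mult_distr. ring.
Qed.

Lemma iter_props (q s u : R) (F T : nat -> R) :
  0 <= q <= 1 -> 0 <= s <= 1 -> 0 <= u <= 1 -> u = 1 - q + q * s * u ^ 2 ->
  F 0%nat = 1 - q + q * s -> T 0%nat = 1 - q ->
  (forall r, F (S r) = 1 - q + q * s * (F r) ^ 2) ->
  (forall r, T (S r) = 1 - q + q * s * (T r) ^ 2) ->
  forall r, (0 <= T r /\ T r <= u /\ u <= F r /\ F r <= 1) /\ q * T r <= 1 - q
            /\ F r - T r <= s ^ (S r).
Proof.
  intros Hq Hs Hu Hfix HF0 HT0 HFS HTS r.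
  induction r as [|r IH].
  - rewrite HF0, HT0. simpl.
    assert (Hqs : 0 <= q * s) by (apply Rmult_le_pos; lra).
    assert (Hu2 : 0 <= u ^ 2) by apply pow2_ge_0.
    assert (Hu21 : u ^ 2 <= 1) by nra.
    assert (0 <= q * s * u ^ 2) by (apply Rmult_le_pos; lra).
    assert (q*s*u^2 <= q*s) by nra.
    repeat split; nra.
  - destruct IH as [[H1 [H2 [H3 H4]]] [H5 H6]].
    rewrite HFS, HTS.
    set (Fr := F r) in *. set (Tr := T r) in *.
    assert (Hqs : 0 <= q * s) by nra.
    repeat split.
    + assert (0 <= q * s * Tr ^ 2) by (apply Rmult_le_pos; [exact Hqs| apply pow2_ge_0]). lra.
    + assert (0 <= q * s * ((u - Tr) * (u + Tr))) by (apply Rmult_le_pos; nra). nra.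
    + assert (0 <= q * s * ((Fr - u) * (Fr + u))) by (apply Rmult_le_pos; nra). nra.
    + assert (q * s * Fr ^ 2 <= q) by (assert (Fr ^ 2 <= 1) by nra; nra). lra.
    + assert (HqT : 0 <= q * Tr) by (apply Rmult_le_pos; lra).
      assert (HqT2 : (q*Tr)*(q*Tr) <= (1-q)*(1-q)) by (apply Rmult_le_compat; lra).
      assert (HqT3 : s * ((q*Tr)*(q*Tr)) <= (1-q)*(1-q)).
      { assert (0 <= (q*Tr)*(q*Tr)) by nra. nra. }
      replace (q * (1 - q + q * s * Tr ^ 2)) with (q * (1 - q) + s * ((q*Tr)*(q*Tr))) by ring.
      nra.
    + assert (Hd : 1 - q + q * s * Fr ^ 2 - (1 - q + q * s * Tr ^ 2)
               = s * ((Fr - Tr) * (q * (Fr + Tr)))) by ring.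
      rewrite Hd.
      assert (q * (Fr + Tr) <= 1) by nra.
      assert (0 <= Fr - Tr) by lra.
      assert ((Fr - Tr) * (q * (Fr + Tr)) <= s ^ S r) by nra.
      change (s ^ S (S r)) with (s * s ^ S r). nra.
Qed.

Definition uu (a q : R) : R :=
  2 * (1 - q) / (1 + sqrt (1 - 4 * (1 - a) * q * (1 - q))).

Lemma uu_props a q : 0 <= a <= 1 -> 0 <= q <= 1 ->
  0 <= uu a q <= 1 /\ uu a q = 1 - q + q * (1 - a) * (uu a q) ^ 2 /\
  g a q = q * (1 - a) * (uu a q) ^ 3.
Proof.
  intros Ha Hq.
  set (D := 1 - 4 * (1 - a) * q * (1 - q)).
  assert (Hq1 : q * (1 - q) <= 1/4) by (assert (0 <= (q-1/2)^2) by apply pow2_ge_0; nra).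
  assert (Hq2 : 0 <= q * (1 - q)) by (apply Rmult_le_pos; lra).
  assert (HD : 0 <= D) by (unfold D; replace (4 * (1 - a) * q * (1 - q)) with (4 * (1 - a) * (q * (1 - q))) by ring; nra).
  set (R := sqrt D).
  assert (HR0 : 0 <= R) by apply sqrt_pos.
  assert (HRR : R * R = D) by (apply sqrt_sqrt; exact HD).
  assert (HR1 : 1 - 2 * q <= R) by (unfold D in HRR; nra).
  assert (Hpos : 0 < 1 + R) by lra.
  assert (Hu : uu a q * (1 + R) = 2 * (1 - q)).
  { unfold uu. fold D. fold R. field. lra. }
  set (u := uu a q) in *.
  assert (Hu0 : 0 <= u) by nra.
  assert (Hu1 : u <= 1) by nra.
  assert (Hfix : u = 1 - q + q * (1 - a) * u ^ 2).
  { assert (H : (1 + R) ^ 2 * (u - (1 - q + q * (1 - a) * u ^ 2)) = 0).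
    { replace ((1 + R) ^ 2 * (u - (1 - q + q * (1 - a) * u ^ 2)))
        with ((u * (1 + R)) * (1 + R) - (1 - q) * (1 + R) ^ 2
              - q * (1 - a) * (u * (1 + R)) ^ 2) by ring.
      rewrite Hu. unfold D in HRR. nra. }
    apply Rmult_integral in H. destruct H as [H|H]; [|lra].
    exfalso. assert (0 < (1 + R) ^ 2) by (apply pow_lt; lra). lra. }
  split; [lra|]. split; [exact Hfix|].
  unfold g.
  destruct (Req_EM_T a 1) as [Ha1|Ha1].
  { subst a. ring. }
  destruct (Req_EM_T a 0) as [Ha0|Ha0].
  { subst a. destruct (Rle_dec q (1/2)) as [Hq22|Hq22].
    - assert (HRe : R = 1 - 2 * q).
      { assert (Hsq: (R - (1 - 2*q)) * (R + (1 - 2*q)) = 0) by (unfold D in HRR; nra).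
        apply Rmult_integral in Hsq. destruct Hsq; lra. }
      assert (u = 1) by (rewrite HRe in Hu; nra). subst u. rewrite H. ring.
    - assert (HRe : R = 2 * q - 1).
      { assert (Hsq: (R - (2*q - 1)) * (R + (2*q - 1)) = 0) by (unfold D in HRR; nra).
        apply Rmult_integral in Hsq. destruct Hsq; lra. }
      assert (u = (1 - q) / q) by (rewrite HRe in Hu; field_simplify_eq; nra; lra).
      rewrite H. field. lra. }
  destruct (Req_EM_T q 0) as [Hq0|Hq0].
  { subst q. ring. }
  fold D. fold R.
  assert (H1R : 1 - R = 2 * (1 - a) * q * u).
  { assert (H : (1 + R) * (1 - R - 2 * (1 - a) * q * u) = 0).
    { replace ((1 + R) * (1 - R - 2 * (1 - a) * q * u))
        with (1 - R * R - 2 * (1 - a) * q * (u * (1 + R))) by ring.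
      rewrite Hu, HRR. unfold D. ring. }
    apply Rmult_integral in H. destruct H as [H|H]; lra. }
  rewrite H1R. field. split; [exact Hq0|]. lra.
Qed.

Lemma C11 : C 1 1 = 1.
Proof. unfold C. simpl. field. Qed.

Lemma GW0 ind q s : GW_expect ind q s 0 = q.
Proof. unfold GW_expect, binom_pmf. simpl. rewrite C11. ring. Qed.

Lemma GWS ind q s L : GW_expect ind q s (S L) = q * W ind q s L 3 1.
Proof. unfold GW_expect, binom_pmf. simpl. rewrite C11. ring. Qed.

Lemma exp_pow_le a L : 0 <= a <= 1 -> (1 - a) ^ L <= exp (- a * INR L).
Proof.
  intros Ha. replace (exp (- a * INR L)) with (exp (- a) ^ L).
  - apply pow_incr. split; [lra|]. pose proof (exp_ineq1_le (- a)). lra.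
  - induction L as [|L IH]. { simpl. rewrite Rmult_0_r, exp_0. reflexivity. }
    rewrite S_INR. replace (- a * (INR L + 1)) with (- a + - a * INR L) by ring.
    rewrite exp_plus, <- IH. reflexivity.
Qed.

Lemma exp_small a L : 0 <= a <= 1 -> (L <= 1)%nat -> 1 <= 3 * exp (- a * INR L).
Proof.
  intros Ha HL.
  assert (H : exp (-1) <= exp (- a * INR L)).
  { destruct L as [|[|L]]; [| |lia]; simpl.
    - rewrite Rmult_0_r. apply Rlt_le, exp_increasing. lra.
    - rewrite Rmult_1_r. destruct (Req_dec a 1). { subst. apply Req_le. reflexivity. } apply Rlt_le, exp_increasing. lra. }
  assert (H2 : exp 1 * exp (-1) = 1) by (rewrite <- exp_plus; replace (1 + -1) with 0 by ring; apply exp_0).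
  pose proof exp_le_3. pose proof (exp_pos (-1)). nra.
Qed.

Lemma main_bound ind a q L : 0 <= a <= 1 -> 0 <= q <= 1 ->
  Rabs (GW_expect ind q (1 - a) L - g a q) <= 3 * exp (- a * INR L).
Proof.
  intros Ha Hq.
  destruct (uu_props a q Ha Hq) as [Hu [Hfix Hg]].
  rewrite Hg. set (u := uu a q) in *. set (s := 1 - a) in *.
  assert (Hs : 0 <= s <= 1) by (unfold s; lra).
  assert (Hg01 : 0 <= q * s * u ^ 3 <= 1).
  { assert (0 <= u ^ 3 <= 1) by (split; [apply pow_le; lra| rewrite <- (pow1 3); apply pow_incr; lra]).
    assert (0 <= q * s) by nra. split; [nra|]. assert (q * s <= 1) by nra. nra. }
  destruct L as [|[|r]].
  - rewrite GW0. pose proof (exp_small a 0 Ha ltac:(lia)). apply Rabs_le. lra.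
  - rewrite GWS. pose proof (exp_small a 1 Ha ltac:(lia)).
    assert (0 <= q * W ind q s 0 3 1 <= 1).
    { destruct ind; simpl; nra. }
    apply Rabs_le. lra.
  - rewrite GWS, W_S1.
    set (F := fun r => q * W false q s r 2 1 + (1 - q)).
    set (T := fun r => q * W true q s r 2 1 + (1 - q)).
    assert (HP := iter_props q s u F T Hq Hs Hu Hfix).
    assert (HV : forall r, 0 <= q * W ind q s r 2 1 + (1 - q) <= 1 /\
               Rabs (q * W ind q s r 2 1 + (1 - q) - u) <= s ^ S r).
    { intro r0.
      destruct HP with (r := r0) as [[H1 [H2 [H3 H4]]] [H5 H6]].
      - unfold F. simpl. ring.
      - unfold T. simpl. ring.
      - intro r1. unfold F. rewrite W_S1. ring.
      - intro r1. unfold T. rewrite W_S1. ring.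
      - destruct ind; [fold (T r0)| fold (F r0)]; split; try lra; apply Rabs_le; lra. }
    destruct (HV r) as [HV1 HV2].
    set (V := q * W ind q s r 2 1 + (1 - q)) in *.
    replace (q * (s * V ^ 3) - q * s * u ^ 3) with (q * s * ((V - u) * (V^2 + V * u + u^2))) by ring.
    rewrite !Rabs_mult.
    assert (Rabs (V ^ 2 + V * u + u ^ 2) <= 3).
    { rewrite Rabs_right; [|nra]. nra. }
    rewrite (Rabs_right q) by lra. rewrite (Rabs_right s) by lra.
    pose proof (exp_pow_le a (S (S r)) Ha). fold s in H0.
    change (s ^ S (S r)) with (s * s ^ S r) in H0.
    assert (0 <= Rabs (V - u)) by apply Rabs_pos.
    assert (Rabs (V - u) * Rabs (V ^ 2 + V * u + u ^ 2) <= s ^ S r * 3).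
    { apply Rmult_le_compat; try lra; apply Rabs_pos. }
    assert (0 <= s ^ S r) by (apply pow_le; lra).
    set (X := Rabs (V - u) * Rabs (V ^ 2 + V * u + u ^ 2)) in *.
    assert (0 <= X) by (unfold X; apply Rmult_le_pos; apply Rabs_pos).
    assert (q * s * X <= s * X) by (apply Rmult_le_compat_r; [lra| nra]).
    assert (s * X <= s * (s ^ S r * 3)) by (apply Rmult_le_compat_l; lra).
    lra.
Qed.

Theorem mainTheorem11 (alphaN : nat -> R) (alpha : R)
  (Hrange : forall N, 0 <= alphaN N <= 1)
  (Hcv : Un_cv alphaN alpha) :
  exists C' : R, 0 < C' /\
    forall (q : R) (N : nat), 0 <= q <= 1 -> (1 <= N)%nat ->
      Rabs (GW_expect false q (1 - alphaN N) (LN N) - g (alphaN N) q)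
        <= C' * exp (- alphaN N * INR (LN N)) /\
      ((1 <= LN N)%nat ->
      Rabs (GW_expect true q (1 - alphaN N) (LN N) - g (alphaN N) q)
        <= C' * exp (- alphaN N * INR (LN N))).
Proof.
  exists 3. split; [lra|]. intros q N Hq _. split.
  - apply main_bound; auto.
  - intros _. apply main_bound; auto.
Qed.
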